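(* Let the standing assumptions (listed in the context) hold, and suppose there are $\bar k\ge0$ and $\mu>0$ such that $\mathcal{J}(x_k)-\mathcal{J}^*\le\frac{1}{\mu}\|\nabla\mathcal{J}(x_k)\|^2$ for all $k\ge\bar k$, where $\mathcal{J}^*:=\lim_{k\to\infty}\mathcal{J}(x_k)$. Then there exists $x^*\in\mathcal{X}$ such that 1) $\nabla\mathcal{J}(x^* )=0$ and $\mathcal{J}^*=\mathcal{J}(x^* )$; 2) the iterates $(x_k)$ converge r-linearly to $x^*$; 3) the gradients $(\nabla\mathcal{J}(x_k))$ converge r-linearly to zero; 4) the function values $(\mathcal{J}(x_k))$ converge q-linearly to $\mathcal{J}(x^* )$; specifically, $\mathcal{J}(x_{k+1})-\mathcal{J}(x^* )\le\left(1-\frac{\sigma\alpha_k\mu}{\|B_k\|}\right)[\mathcal{J}(x_k)-\mathcal{J}(x^* )]$ for all $k\ge\bar k$, and the supremum of the term in round brackets is strictly smaller than 1.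
   Context: Let $\mathcal{X}$ be a Hilbert space and $\mathcal{J}:\mathcal{X}\to\mathbb{R}$. Algorithm SLBFGS (structured inverse L-BFGS): inputs $x_0\in\mathcal{X}$, $\epsilon\geq0$, $\ell\in\mathbb{N}_0$, $c_0\geq 0$, $C_0\in[c_0,\infty]$, $c_s,c_1,c_2>0$; let $\tau_0>0$. For $k=0,1,2,\ldots$: let $m=\max\{0,k-\ell\}$; choose a symmetric positive semi-definite bounded linear operator $S_k$; set $B_k^{(0)}=\tau_k I+S_k$; let $B_k$ be obtained from $B_k^{(0)}$ and the currently stored pairs $(s_j,y_j)$, $m\le j\le k-1$, by successive L-BFGS updates $B\mapsto B+\frac{yy^T}{y^Ts}-\frac{Bss^TB}{s^TBs}$; set $d_k=-B_k^{-1}\nabla\mathcal{J}(x_k)$; compute a step length $\alpha_k>0$ by a line search; set $s_k=\alpha_kd_k$, $x_{k+1}=x_k+s_k$, $y_k=\nabla\mathcal{J}(x_{k+1})-\nabla\mathcal{J}(x_k)$; store $(s_k,y_k)$ only if $y_k^Ts_k>c_s\|s_k\|^2$; if $k\ge\ell$ remove $(s_m,y_m)$ from storage; stop with output $x_{k+1}$ if $\|\nabla\mathcal{J}(x_{k+1})\|\le\epsilon$; set $z_k=y_k-S_{k+1}s_k$, $\omega^l_{k+1}=\min\{c_0,c_1\|\nabla\mathcal{J}(x_{k+1})\|^{c_2}\}$, $\omega^u_{k+1}=\max\{C_0,(c_1\|\nabla\mathcal{J}(x_{k+1})\|^{c_2})^{-1}\}$; with $P(t)=\min\{\max\{t,\omega^l_{k+1}\},\omega^u_{k+1}\}$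 and $\rho=z_k^Ts_k$ let $\tau^s=P(\rho/\|s_k\|^2)$, $\tau^g=P(\|z_k\|/\|s_k\|)$, $\tau^z=P(\|z_k\|^2/\rho)$; if $\rho>0$ choose $\tau_{k+1}\in[\tau^s,\tau^z]$, else choose $\tau_{k+1}\in[\tau^s,\tau^g]$. Line searches: Armijo with backtracking means, for fixed $\beta,\sigma\in(0,1)$, $\alpha_k$ is the largest number in $\{1,\beta,\beta^2,\ldots\}$ with $\mathcal{J}(x_{k+1})\le\mathcal{J}(x_k)+\alpha_k\sigma\nabla\mathcal{J}(x_k)^Td_k$; the Wolfe–Powell conditions are this Armijo inequality together with $\nabla\mathcal{J}(x_{k+1})^Td_k\ge\eta\nabla\mathcal{J}(x_k)^Td_k$ for fixed $\eta\in(\sigma,1)$. Let $\Omega=\{x:\mathcal{J}(x)\le\mathcal{J}(x_0)\}$ and $\Omega_\delta=\{x:\exists\hat x\in\Omega,\ \|x-\hat x\|<\delta\}$. Standing assumptions: 1) $\mathcal{J}$ is continuously differentiable and bounded below; 2) $\nabla\mathcal{J}$ is Lipschitz continuous on $\Omega$ with constant $L>0$; 3) $(\|S_k\|)$ is bounded; 4) the step sizes consistently satisfy the Armijo condition computed by backtracking, or consistently satisfy the Wolfe–Powell conditions; in the Armijo case there is $\delta>0$ such that $\mathcal{J}$ or $\nabla\mathcal{J}$ is uniformly continuous on $\Omega_\delta$; 5) $c_0=0$ is only chosen if then $\sup_k\|(B_k^{(0)})^{-1}\|<\infty$; 6) $C_0=\infty$ is only chosen if either the interval $[\tau^s,\tau^z]$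 is replaced by $[\tau^s,\tau^g]$, or $\mathcal{J}$ is twice continuously differentiable, $\int_0^1\nabla^2\mathcal{J}(x_k+ts_k)\,dt-S_{k+1}$ is symmetric positive semi-definite for all $k$ with bounded norms; 7) the algorithm is run with $\epsilon=0$ and generates an infinite sequence $(x_k)$; 8) $(\|B_k\|)$ and $(\|B_k^{-1}\|)$ are bounded; 9) if Armijo backtracking is used, there is $\delta>0$ such that $\mathcal{J}$ is uniformly continuous on $\Omega_\delta$ or $\nabla\mathcal{J}$ is Lipschitz continuous on $\Omega_\delta$. *)

(* Defs.v *)
From HB Require Import structures.
From mathcomp Require Import all_boot all_order all_algebra.
From mathcomp Require Import all_classical all_reals all_analysis.
Set Implicit Arguments.
Unset Strict Implicit.
Unset Printing Implicit Defensive.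
Import Order.TTheory GRing.Theory Num.Theory.
Import numFieldNormedType.Exports.
Local Open Scope classical_set_scope.
Local Open Scope ring_scope.

Section SLBFGS.
Variables (R : realType) (X : completeNormedModType R).

Definition inner_product (ip : X -> X -> R) : Prop :=
  [/\ forall u v, ip u v = ip v u,
      forall a u v w, ip (a *: u + v) w = a * ip u w + ip v w
    & forall u, ip u u = `|u| ^+ 2].

Definition C1_with_gradient (ip : X -> X -> R) (J : X -> R) (g : X -> X) : Prop :=
  (forall x, differentiable J x /\ forall h, ('d J x : X -> R) h = ip (g x) h)
  /\ continuous g.

(** [J] twice continuously differentiable: the gradient [g] is Frechet
    differentiable and its derivative (the Hessian) is continuous in the
    operator norm. *)
Definition C2_gradient (g : X -> X) : Prop :=
  (forall x, differentiable g x) /\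
  forall x e, 0 < e -> exists2 d, 0 < d &
    forall y, `|y - x| < d -> forall v,
      `|('d g y : X -> X) v - ('d g x : X -> X) v| <= e * `|v|.

Definition opnorm (A : X -> X) : R :=
  sup [set r | exists2 v : X, `|v| <= 1 & r = `|A v|].

Definition unif_bounded_ops (A : nat -> X -> X) : Prop :=
  exists M : R, forall k v, `|A k v| <= M * `|v|.

Definition unif_bounded_inverses (A : nat -> X -> X) : Prop :=
  exists M : R, forall k,
    (forall w, exists v, A k v = w) /\ (forall v, `|v| <= M * `|A k v|).

Definition symmetric_psd (ip : X -> X -> R) (A : X -> X) : Prop :=
  (forall u v, ip (A u) v = ip u (A v)) /\ (forall u, 0 <= ip (A u) u).

Definition grad_lipschitz_on (A : set X) (f : X -> X) (L : R) : Prop :=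
  forall x y, A x -> A y -> `|f x - f y| <= L * `|x - y|.

Definition unif_continuous_on {Y : normedModType R} (A : set X) (f : X -> Y) : Prop :=
  forall e, 0 < e -> exists2 d, 0 < d &
    forall x y, A x -> A y -> `|x - y| < d -> `|f x - f y| < e.

Definition levelset (J : X -> R) (x0 : X) : set X := [set x | J x <= J x0].
Definition levelset_nbhd (J : X -> R) (x0 : X) (delta : R) : set X :=
  [set x | exists2 xh, levelset J x0 xh & `|x - xh| < delta].

(** the L-BFGS update  B |-> B + y y^T/(y^T s) - B s s^T B/(s^T B s) *)
Definition bfgs_update (ip : X -> X -> R) (B : X -> X) (sy : X * X) : X -> X :=
  let: (s, y) := sy in
  fun v => B v + (ip y v / ip y s) *: y - (ip s (B v) / ip s (B s)) *: B s.

Definition armijo (ip : X -> X -> R) (J : X -> R) (g : X -> X)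
    (sigma : R) (x d : X) (a : R) : Prop :=
  J (x + a *: d) <= J x + a * sigma * ip (g x) d.

Definition wolfe_powell (ip : X -> X -> R) (J : X -> R) (g : X -> X)
    (sigma eta : R) (x d : X) (a : R) : Prop :=
  armijo ip J g sigma x d a /\ eta * ip (g x) d <= ip (g (x + a *: d)) d.

Definition armijo_backtracking (ip : X -> X -> R) (J : X -> R) (g : X -> X)
    (beta sigma : R) (x d : X) (a : R) : Prop :=
  exists i : nat, a = beta ^+ i /\ armijo ip J g sigma x d a /\
    forall i' : nat, (i' < i)%N -> ~ armijo ip J g sigma x d (beta ^+ i').

(** projection P(t) = min{max{t, wl}, wu}, with [wu = None] meaning +oo *)
Definition clamp (wl : R) (wu : option R) (t : R) : R :=
  match wu with
  | Some u => Num.min (Num.max t wl) u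
  | None => Num.max t wl
  end.

(** An infinite run (epsilon = 0, never stopping) of Algorithm SLBFGS.
    - [C0 = None] encodes C_0 = +oo;
    - [armijo_ls = true]: Armijo backtracking with parameters beta, sigma;
      [armijo_ls = false]: Wolfe--Powell with parameters sigma, eta;
    - [tau_g_variant = true]: the interval [tau^s, tau^z] is replaced by
      [tau^s, tau^g] (the variant mentioned in standing assumption 6);
    - [S k] are the chosen operators S_k, [tau k] the scalings tau_k,
      [alpha k] the step lengths, [B k] the operators B_k, [d k] the
      directions d_k. *)
Definition slbfgs_run (ip : X -> X -> R) (J : X -> R) (g : X -> X)
    (ell : nat) (c0 : R) (C0 : option R) (cs c1 c2 : R)
    (armijo_ls : bool) (beta sigma eta : R) (tau_g_variant : bool)
    (x : nat -> X) (S : nat -> {linear X -> X}) (tau : nat -> R)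
    (alpha : nat -> R) (B : nat -> X -> X) (d : nat -> X) : Prop :=
  let s k := alpha k *: d k in
  let y k := g (x k.+1) - g (x k) in
  let stored j := cs * `|s j| ^+ 2 < ip (y j) (s j) in
  ((0 <= c0 /\ (if C0 is Some C then c0 <= C else True)) /\
   (0 < cs /\ 0 < c1 /\ 0 < c2) /\ 0 < tau 0) /\
  (if armijo_ls then 0 < beta < 1 /\ 0 < sigma < 1
   else 0 < sigma < eta /\ eta < 1) /\
  (forall k, symmetric_psd ip (S k)) /\
  (* B_k: successive updates of tau_k I + S_k with the stored pairs
     (s_j, y_j), m <= j <= k-1, m = max(0, k - ell), in increasing j *)
  (forall k, let m := (k - ell)%N in
     B k = foldl (bfgs_update ip) (fun v => tau k *: v + S k v)
             [seq (s j, y j) | j <- iota m (k - m) & stored j]) /\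
  (forall k, B k (d k) = - g (x k)) /\
  (forall k, 0 < alpha k /\
     (if armijo_ls then armijo_backtracking ip J g beta sigma (x k) (d k) (alpha k)
      else wolfe_powell ip J g sigma eta (x k) (d k) (alpha k))) /\
  (forall k, x k.+1 = x k + s k) /\
  (* epsilon = 0 and the algorithm never stops *)
  (forall k, g (x k.+1) != 0) /\
  (forall k,
     let z := y k - S k.+1 (s k) in
     let w := c1 * powR `|g (x k.+1)| c2 in
     let wl := Num.min c0 w in
     let wu := if C0 is Some C then Some (Num.max C w^-1) else None in
     let P := clamp wl wu in
     let rho := ip z (s k) in
     let taus := P (rho / `|s k| ^+ 2) in
     let taug := P (`|z| / `|s k|) in
     let tauz := P (`|z| ^+ 2 / rho) in
     if (0 < rho) && ~~ tau_g_variant then taus <= tau k.+1 <= tauz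
     else taus <= tau k.+1 <= taug).

Definition rlinear_conv {Y : normedModType R} (u : nat -> Y) (l : Y) : Prop :=
  exists C q : R, [/\ 0 <= C, 0 <= q, q < 1 & forall k, `|u k - l| <= C * q ^+ k].

Definition qlinear_conv {Y : normedModType R} (u : nat -> Y) (l : Y) : Prop :=
  exists q : R, 0 <= q /\ q < 1 /\
    exists K : nat, forall k, (K <= k)%N -> `|u k.+1 - l| <= q * `|u k - l|.

(** The operator
    A_k := int_0^1 Hess J(x_k + t s_k) dt - S_{k+1} is described through its
    bilinear form <A_k v, w> (weak integral of the Hessian [d g]). *)
Definition avg_hessian_cond (ip : X -> X -> R) (g : X -> X)
    (S : nat -> {linear X -> X}) (x : nat -> X) (alpha : nat -> R)
    (d : nat -> X) : Prop :=
  exists M : R, forall k (v w : X),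
    let s := alpha k *: d k in
    let A (v w : X) :=
      (\int[@lebesgue_measure R]_(t in [set t : R | 0 <= t <= 1])
          ip (('d g (x k + t *: s) : X -> X) v) w) - ip (S k.+1 v) w in
    [/\ A v w = A w v, 0 <= A v v & `|A v w| <= M * `|v| * `|w|].

End SLBFGS.

(* Main.v *)
Require Import Defs.
From HB Require Import structures.
From mathcomp Require Import all_boot all_order all_algebra.
From mathcomp Require Import all_classical all_reals all_analysis.
From mathcomp Require Import ring lra.
Import Order.TTheory GRing.Theory Num.Theory.
Import numFieldNormedType.Exports.
Local Open Scope classical_set_scope.
Local Open Scope ring_scope.

Section CS.
Variables (R : realType) (X : normedModType R) (b : X -> X -> R).
Hypothesis bsym : forall u v, b u v = b v u.
Hypothesis blin : forall a u v w, b (a *: u + v) w = a * b u w + b v w.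
Hypothesis bpos : forall u, 0 <= b u u.

Lemma b0l w : b 0 w = 0.
Proof.
have := blin 1 0 0 w; rewrite scaler0 addr0 mul1r => h; lra.
Qed.

Lemma bZl a u w : b (a *: u) w = a * b u w.
Proof. by have := blin a u 0 w; rewrite addr0 b0l addr0. Qed.

Lemma bDl u v w : b (u + v) w = b u w + b v w.
Proof. by have := blin 1 u v w; rewrite scale1r mul1r. Qed.

Lemma bDr u v w : b w (u + v) = b w u + b w v.
Proof. by rewrite bsym bDl !(bsym w). Qed.

Lemma bZr a u w : b w (a *: u) = a * b w u.
Proof. by rewrite bsym bZl bsym. Qed.

Lemma b_CS u v : b u v ^+ 2 <= b u u * b v v.
Proof.
have P t : 0 <= b v v * t ^+ 2 + 2 * b u v * t + b u u.
  have := bpos (t *: v + u).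
  rewrite bDl bDr bDr !bZl !bZr (bsym v u).
  by move=> h; apply: (le_trans h); rewrite le_eqVlt; apply/orP; left; apply/eqP; ring.
have := bpos v; rewrite le_eqVlt => /orP[/eqP A0|Apos].
  have [->|Bn0] := eqVneq (b u v) 0.
    by rewrite expr0n /= -A0 mulr0.
  have := P (- (b u u + 1) / (2 * b u v)).
  rewrite -A0 mul0r add0r.
  have -> : 2 * b u v * (- (b u u + 1) / (2 * b u v)) = - (b u u + 1).
    by field; rewrite ?mulf_neq0 // ?pnatr_eq0 //; exact/andP.
  lra.
have := P (- b u v / b v v).
have -> : b v v * (- b u v / b v v) ^+ 2 + 2 * b u v * (- b u v / b v v) + b u u
   = (b u u * b v v - b u v ^+ 2) / b v v.
  by field; rewrite gt_eqF.
rewrite pmulr_lge0 ?invr_gt0 // subr_ge0 mulrC //.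
Qed.
End CS.

Section IP.
Context {R : realType} {X : completeNormedModType R} {ip : X -> X -> R}.
Hypothesis Hip : inner_product ip.

Lemma ipsym u v : ip u v = ip v u. Proof. by case: Hip. Qed.
Lemma iplin a u v w : ip (a *: u + v) w = a * ip u w + ip v w. Proof. by case: Hip. Qed.
Lemma ipnorm u : ip u u = `|u| ^+ 2. Proof. by case: Hip. Qed.
Lemma ippos u : 0 <= ip u u. Proof. by rewrite ipnorm sqr_ge0. Qed.

Lemma ipDl u v w : ip (u + v) w = ip u w + ip v w. Proof. exact: (@bDl _ _ _ iplin). Qed.
Lemma ipDr u v w : ip w (u + v) = ip w u + ip w v. Proof. exact: (@bDr _ _ _ ipsym iplin). Qed.
Lemma ipZl a u w : ip (a *: u) w = a * ip u w. Proof. exact: (@bZl _ _ _ iplin). Qed.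
Lemma ipZr a u w : ip w (a *: u) = a * ip w u. Proof. exact: (@bZr _ _ _ ipsym iplin). Qed.
Lemma ipNl u w : ip (- u) w = - ip u w.
Proof. by rewrite -scaleN1r ipZl mulN1r. Qed.
Lemma ipNr u w : ip w (- u) = - ip w u.
Proof. by rewrite -scaleN1r ipZr mulN1r. Qed.
Lemma ipBl u v w : ip (u - v) w = ip u w - ip v w.
Proof. by rewrite ipDl ipNl. Qed.

Lemma ipCS u v : `|ip u v| <= `|u| * `|v|.
Proof.
have := @b_CS _ _ _ ipsym iplin ippos u v; rewrite !ipnorm => h.
have h1 : 0 <= `|u| * `|v| by rewrite mulr_ge0.
rewrite ler_norml; apply/andP; split; nra.
Qed.

Definition linop (B : X -> X) := forall a u v, B (a *: u + v) = a *: B u + B v.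
Definition symop (B : X -> X) := forall u v, ip (B u) v = ip u (B v).
Definition psdop (B : X -> X) := forall u, 0 <= ip (B u) u.

Lemma linop0 B : linop B -> B 0 = 0.
Proof.
move=> lB; have := lB 1 0 0; rewrite scaler0 addr0 scale1r => h.
by apply: (addrI (B 0)); rewrite addr0 -h.
Qed.
Lemma linopZ B a u : linop B -> B (a *: u) = a *: B u.
Proof. by move=> lB; have := lB a u 0; rewrite !addr0 linop0 // addr0. Qed.
Lemma linopN B u : linop B -> B (- u) = - B u.
Proof. by move=> lB; rewrite -scaleN1r linopZ // scaleN1r. Qed.

Lemma opCS B u v : linop B -> symop B -> psdop B ->
  ip (B u) v ^+ 2 <= ip (B u) u * ip (B v) v.
Proof.
move=> lB sB pB; apply: (@b_CS _ _ (fun u v => ip (B u) v)) => //.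
- by move=> u1 v1; rewrite sB ipsym.
- by move=> a u1 v1 w; rewrite lB ipDl ipZl.
Qed.

Lemma key_ineq B (N : R) u : linop B -> symop B -> psdop B -> 0 <= N ->
  (forall w, `|B w| <= N * `|w|) -> `|B u| ^+ 2 <= N * ip (B u) u.
Proof.
move=> lB sB pB N0 HN.
set w := B u.
have h1 : `|w| ^+ 2 = ip (B u) w by rewrite ipnorm.
have h2 := @opCS B u w lB sB pB.
have h3 : ip (B w) w <= N * `|w| ^+ 2.
  apply: le_trans (ler_norm _) _; apply: le_trans (ipCS _ _) _.
  by rewrite expr2 mulrA ler_wpM2r ?HN.
have h4 := pB u.
have h5 : 0 <= `|w| by [].
rewrite -/w in h2 h4 *.
rewrite -h1 in h2.
have [w0|wpos] := eqVneq `|w| 0.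
  by rewrite w0 expr0n /= mulr_ge0.
have wp : 0 < `|w| ^+ 2 by rewrite exprn_gt0 // lt_def wpos.
rewrite h1 in h2 h3 wp *.
move: h2 h3 h4 wp; set a := ip (B u) w; set P := ip (B u) u; set Q := ip (B w) w.
move=> h2 h3 h4 wp.
have h6 : P * Q <= P * (N * a) by rewrite ler_wpM2l.
nra.
Qed.

Definition opbound (B : X -> X) (M : R) := forall v : X, `|B v| <= M * `|v|.

Lemma opnorm_set_ne (B : X -> X) : [set r : R | exists2 v : X, `|v| <= 1 & r = `|B v|] !=set0.
Proof. by exists (`|B 0| : R); exists 0; rewrite ?normr0. Qed.

Lemma opnorm_le B (M : R) : 0 <= M -> opbound B M -> opnorm B <= M.
Proof.
move=> M0 HM; apply: ge_sup; first exact: opnorm_set_ne.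
move=> r [v v1 ->]; apply: le_trans (HM v) _.
by rewrite -[leRHS]mulr1 ler_wpM2l.
Qed.

Lemma opnorm_ub B (M : R) u : linop B -> 0 <= M -> opbound B M ->
  `|B u| <= opnorm B * `|u|.
Proof.
move=> lB M0 HM.
have hub : has_ubound [set r | exists2 v : X, `|v| <= 1 & r = `|B v|].
  exists M => r [v v1 ->]; apply: le_trans (HM v) _.
  by rewrite -[leRHS]mulr1 ler_wpM2l.
have [->|u0] := eqVneq u 0.
  by rewrite linop0 // !normr0 mulr0.
have nu : 0 < `|u| by rewrite normr_gt0.
have := ub_le_sup hub.
rewrite /opnorm => h.
have : `|B (`|u|^-1 *: u)| <= sup [set r | exists2 v : X, `|v| <= 1 & r = `|B v|].
  apply: h; exists (`|u|^-1 *: u) => //.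
  by rewrite normrZ ger0_norm ?invr_ge0 // mulVf // gt_eqF.
rewrite linopZ // normrZ ger0_norm ?invr_ge0 //.
by rewrite ler_pdivrMl // mulrC.
Qed.

Lemma opnorm_ge0 B (M : R) : linop B -> 0 <= M -> opbound B M -> 0 <= opnorm B.
Proof.
move=> lB M0 HM.
have hub : has_ubound [set r | exists2 v : X, `|v| <= 1 & r = `|B v|].
  exists M => r [v v1 ->]; apply: le_trans (HM v) _.
  by rewrite -[leRHS]mulr1 ler_wpM2l.
have h0 : [set r | exists2 v : X, `|v| <= 1 & r = `|B v|] 0.
  by exists 0; rewrite ?normr0 // linop0 // normr0.
exact: (ub_le_sup hub h0).
Qed.

End IP.
Arguments linop {R X}.
Arguments symop {R X}.
Arguments psdop {R X}.
Arguments opbound {R X}.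

Section BFGS.
Variables (R : realType) (X : completeNormedModType R) (ip : X -> X -> R).
Hypothesis Hip : inner_product ip.

Lemma bfgs_lin B s y : linop B -> linop (bfgs_update ip B (s, y)).
Proof.
move=> lB a u v /=.
rewrite (lB a u v) !(ipDr Hip) !(ipZr Hip).
rewrite !mulrDl !scalerDl !scalerDr !scalerN !scalerA !mulrA.
set p1 := a *: B u; set p2 := B v.
set p3 := (a * ip y u / ip y s) *: y; set p4 := (ip y v / ip y s) *: y.
set p5 := (a * ip s (B u) / ip s (B s)) *: B s; set p6 := (ip s (B v) / ip s (B s)) *: B s.
rewrite opprD.
by rewrite [p1 + p2 + _]addrACA [_ + (- p5 - p6)]addrACA.
Qed.

Lemma bfgs_sym B s y : linop B -> symop ip B -> symop ip (bfgs_update ip B (s, y)).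
Proof.
move=> lB sB u v /=.
rewrite !(ipDl Hip) !(ipDr Hip) (ipNl Hip) (ipNr Hip) !(ipZl Hip) !(ipZr Hip) sB.
rewrite (ipsym Hip u y) (sB s v) -(sB u s) (ipsym Hip (B u) s).
ring.
Qed.

Lemma bfgs_psd B s y : linop B -> symop ip B -> psdop ip B -> 0 <= ip y s ->
  psdop ip (bfgs_update ip B (s, y)).
Proof.
move=> lB sB pB ys u /=.
rewrite !(ipDl Hip) (ipNl Hip) !(ipZl Hip).
rewrite -(sB s u) -(sB s s) (ipsym Hip y u).
have cs := opCS Hip B s u lB sB pB.
have hs : 0 <= ip (B s) s := pB s.
have hu := pB u.
move: cs hs hu; set P := ip (B u) u; set Y := ip u y; set Q := ip (B s) u; set D := ip (B s) s.
move=> cs hs hu.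
have t1 : 0 <= Y / ip y s * Y.
  by rewrite mulrAC -expr2 divr_ge0 // sqr_ge0.
have t2 : Q / D * Q <= P.
  rewrite mulrAC -expr2.
  have [->|sp] := eqVneq D 0.
    by rewrite invr0 mulr0.
  have sp' : 0 < D by rewrite lt_def sp hs.
  by rewrite ler_pdivrMr // mulrC.
lra.
Qed.

Lemma fold_inv (l : seq (X * X)) B :
  linop B -> symop ip B -> psdop ip B -> all (fun p => 0 <= ip p.2 p.1) l ->
  [/\ linop (foldl (bfgs_update ip) B l), symop ip (foldl (bfgs_update ip) B l)
    & psdop ip (foldl (bfgs_update ip) B l)].
Proof.
elim: l B => [|[s y] l IH] B lB sB pB //= /andP[ys al].
apply: IH => //.
- exact: bfgs_lin.
- exact: bfgs_sym.
- exact: bfgs_psd.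
Qed.

End BFGS.

Lemma deriv_right_min (R : realType) (f : R -> R) (c b : R) : c < b ->
  derivable f c 1 -> (forall h, c < h < b -> f c <= f h) -> 0 <= 'D_1 f c.
Proof.
move=> cb df fmin.
rewrite ['D_1 f c]cvg_at_rightE; last exact: df.
apply: limr_ge.
  rewrite -(cvg_at_rightE (fun h : R => h^-1 *: ((f \o shift c) _ - f c))) //.
  apply: cvg_trans df; apply: cvg_app.
  move=> A [e egt0 Ae]; exists e => // y ye ygt0; apply: Ae => //.
  exact/lt0r_neq0.
near=> h; apply: mulr_ge0.
  by rewrite invr_ge0; apply: ltW; near: h; exists 1 => /=.
rewrite subr_ge0 [_%:A]mulr1; apply: fmin; near: h.
exists (b - c); first by rewrite /= subr_gt0.
move=> h; rewrite /= distrC subr0 => hb h0.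
apply/andP; split; first by rewrite ltrDr.
by rewrite -ltrBrDr; apply: le_lt_trans hb; apply: ler_norm.
Unshelve. all: by end_near.
Qed.

Section Line.
Context {R : realType} {X : completeNormedModType R} {ip : X -> X -> R}.
Variables (J : X -> R) (g : X -> X).
Hypothesis HJ : forall p, differentiable J p /\ forall h, ('d J p : X -> R) h = ip (g p) h.

Lemma line_derive (x d : X) (s : R) :
  is_derive s 1 (fun r : R => J (x + r *: d)) (ip (g (x + s *: d)) d).
Proof.
set p := x + s *: d.
have E : (fun h : R => h^-1 *: (((fun r : R => J (x + r *: d)) \o shift s) (h *: 1)
            - J (x + s *: d)))
       = (fun h : R => h^-1 *: ((J \o shift p) (h *: d) - J p)).
  apply: funext => h /=; congr (_ *: (J _ - _)).
  by rewrite /p [_%:A]mulr1 scalerDl addrCA addrC.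
have dJ : derivable J p d by apply: diff_derivable; case: (HJ p).
apply: DeriveDef.
  by rewrite /derivable E.
rewrite /derive E -/(derive J p d) deriveE; last by case: (HJ p).
by case: (HJ p).
Qed.

Lemma armijo_point (x d : X) (t sg : R) : 0 < t -> 0 < sg -> sg < 1 ->
  ip (g x) d < 0 ->
  J x + t * sg * ip (g x) d < J (x + t *: d) ->
  exists th, [/\ 0 < th, th < t, ip (g (x + th *: d)) d = sg * ip (g x) d
     & J (x + th *: d) <= J x].
Proof.
move=> t0 sg0 sg1 c0 fail.
set c := ip (g x) d in c0 fail *.
set k := sg * c.
pose phi : R -> R := (fun r : R => J (x + r *: d)) - k \*: (@id R).
have phiE r : phi r = J (x + r *: d) - k * r by [].
have dphi (s : R) : is_derive s 1 phi (ip (g (x + s *: d)) d - k *: 1).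
  rewrite /phi; apply: is_deriveB; first exact: line_derive.
have dv (s : R) : derivable phi s 1 by case: (dphi s).
have Dv (s : R) : 'D_1 phi s = ip (g (x + s *: d)) d - k by case: (dphi s) => _ ->; rewrite [_ *: 1]mulr1.
have cont : {within `[0, t], continuous phi}.
  by apply: derivable_within_continuous => s _; exact: dv.
have [m m0t mmin] := EVT_min (ltW t0) cont.
have phi0 : phi 0 = J x by rewrite phiE scale0r addr0 mulr0 subr0.
have phit : J x < phi t by rewrite phiE /k; lra.
have mle : phi m <= J x.
  by rewrite -phi0; apply: mmin; rewrite in_itv /= lexx ltW.
have m0 : 0 <= m by move: m0t; rewrite in_itv /= => /andP[].
have mt : m <= t by move: m0t; rewrite in_itv /= => /andP[].
have mnt : m != t by apply/eqP => mt'; move: mle; rewrite mt'; lra.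
have mn0 : m != 0.
  apply/eqP => m0'.
  have : 0 <= 'D_1 phi 0.
    apply: (@deriv_right_min _ phi 0 t t0 (dv 0)) => h /andP[h0 ht].
    by rewrite -m0'; apply: mmin; rewrite in_itv /= !ltW.
  rewrite Dv scale0r addr0 /k -/c => h1.
  have : 0 < (1 - sg) * (- c) by rewrite mulr_gt0 // ?subr_gt0 // oppr_gt0.
  lra.
have mo : m \in `]0, t[ by rewrite in_itv /= !lt_def mn0 m0 mt (eq_sym t m) (negbTE mnt).
have h1 : is_derive m 1 phi 0.
  apply: (derive1_at_min (ltW t0) (fun s _ => dv s) mo) => s.
  by rewrite in_itv /= => /andP[? ?]; apply: mmin; rewrite in_itv /= !ltW.
have e1 : 'D_1 phi m = 0 by case: h1.
rewrite Dv in e1.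
have mpos : 0 < m by rewrite lt_def mn0 m0.
have mlt : m < t by rewrite lt_def (eq_sym t m) mnt mt.
exists m; split => //.
  move: e1; rewrite /k /c; lra.
move: mle; rewrite phiE.
have : k * m < 0 by rewrite /k pmulr_llt0 // pmulr_rlt0.
lra.
Qed.

End Line.

Lemma ext_geom (R : realType) (u : nat -> R) (r : R) (K : nat) : 0 < r ->
  forall C, (forall k, (K <= k)%N -> u k <= C * r ^+ k) ->
  exists C', 0 <= C' /\ forall k, u k <= C' * r ^+ k.
Proof.
move=> r0; elim: K => [|K IH] C HC.
  exists `|C|; split => // k; apply: le_trans (HC k isT) _.
  by rewrite ler_pM2r ?exprn_gt0 // ler_norm.
apply: (IH (`|C| + `|u K| / r ^+ K)) => k; rewrite leq_eqVlt => /orP[/eqP <-|Kk].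
  have rK : 0 < r ^+ K by rewrite exprn_gt0.
  rewrite mulrDl; apply: le_trans (ler_norm _) _.
  rewrite divfK ?gt_eqF // lerDr mulr_ge0 // ltW //.
apply: le_trans (HC k Kk) _; rewrite ler_pM2r ?exprn_gt0 //.
apply: le_trans (ler_norm _) _; rewrite lerDl divr_ge0 // exprn_ge0 // ltW //.
Qed.

Lemma geom_cauchy (R : realType) (X : completeNormedModType R) (u : nat -> X)
  (C r : R) : 0 <= r -> r < 1 -> (forall k, `|u k.+1 - u k| <= C * r ^+ k) ->
  exists l, u @ \oo --> l /\ forall k, `|u k - l| <= C / (1 - r) * r ^+ k.
Proof.
move=> r0 r1 Hu.
have C0 : 0 <= C by have := Hu 0%N; rewrite expr0 mulr1; apply: le_trans.
have r1' : 0 < 1 - r by rewrite subr_gt0.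
have part k n : `|u (k + n)%N - u k| <= C * (r ^+ k - r ^+ (k + n)) / (1 - r).
  elim: n => [|n IHn].
    by rewrite addn0 subrr normr0 subrr mulr0 mul0r.
  rewrite addnS.
  have -> : u (k + n).+1 - u k = (u (k + n).+1 - u (k + n)%N) + (u (k + n)%N - u k).
    by rewrite addrA subrK.
  apply: le_trans (ler_normD _ _) _.
  have -> : C * (r ^+ k - r ^+ (k + n).+1) / (1 - r)
    = C * r ^+ (k + n) + C * (r ^+ k - r ^+ (k + n)) / (1 - r).
    by rewrite exprS; field; rewrite gt_eqF.
  exact: lerD.
pose v n := u n.+1 - u n.
have sv n : series v n = u n - u 0%N.
  elim: n => [|n IHn]; first by rewrite seriesEnat /= big_geq // subrr.
  by rewrite seriesSr IHn /v addrC addrA subrK.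
have nsv n : series (fun i => `|v i|) n <= C / (1 - r).
  have : series (fun i => `|v i|) n <= C * (1 - r ^+ n) / (1 - r).
    elim: n => [|n IHn]; first by rewrite seriesEnat /= big_geq // expr0 subrr mulr0 mul0r.
    rewrite seriesSr; apply: le_trans (lerD IHn (Hu n)) _.
    by rewrite le_eqVlt; apply/orP; left; apply/eqP; rewrite exprS; field; rewrite gt_eqF.
  move/le_trans; apply; rewrite ler_pM2r ?invr_gt0 //.
  by rewrite -[leRHS]mulr1 ler_wpM2l // lerBlDr lerDl exprn_ge0.
have cn : cvgn (series (fun i => `|v i|)).
  apply: nondecreasing_is_cvgn.
    apply/nondecreasing_seqP => n; rewrite seriesSr lerDl //.
  by exists (C / (1 - r)) => _ [n _ <-].
have cs : cvgn (series v) by apply: normed_cvg.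
set l0 := limn (series v).
have hl : u @ \oo --> (u 0%N + l0).
  have E : (cst (u 0%N) + series v) = u.
    by apply: funext => n; rewrite -[LHS]/(u 0%N + series v n) sv addrC subrK.
  rewrite -{1}E.
  apply: cvgD; first exact: cvg_cst.
  exact: cs.
exists (u 0%N + l0); split => // k.
rewrite distrC.
have h1 : (u - cst (u k)) @ \oo --> (u 0%N + l0 - u k).
  by apply: cvgB => //; exact: cvg_cst.
have h2 : (fun n => `|u n - u k|) @ \oo --> `|u 0%N + l0 - u k|.
  exact: cvg_norm h1.
apply: (cvgr_to_le h2).
exists k => // n /= kn.
have := part k (n - k)%N; rewrite subnKC // => h; apply: le_trans h _.
have -> : C / (1 - r) * r ^+ k = C * r ^+ k / (1 - r) by rewrite mulrAC.
by rewrite ler_pM2r ?invr_gt0 // ler_wpM2l // lerBlDr lerDl exprn_ge0.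
Qed.

Theorem theorem4p12 (R : realType) (X : completeNormedModType R)
    (ip : X -> X -> R) (J : X -> R) (g : X -> X)
    (ell : nat) (c0 : R) (C0 : option R) (cs c1 c2 : R)
    (armijo_ls : bool) (beta sigma eta : R) (tau_g_variant : bool)
    (x : nat -> X) (S : nat -> {linear X -> X}) (tau alpha : nat -> R)
    (B : nat -> X -> X) (d : nat -> X) (L : R) (kbar : nat) (mu : R) :
  (* X is a (real) Hilbert space with inner product ip *)
  inner_product ip ->
  (* (x_k) is an infinite run of SLBFGS (epsilon = 0), assumption 7 *)
  slbfgs_run ip J g ell c0 C0 cs c1 c2 armijo_ls beta sigma eta tau_g_variant
    x S tau alpha B d ->
  (* 1) *)
  C1_with_gradient ip J g ->
  (exists lb : R, forall z, lb <= J z) ->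
  (* 2) *)
  0 < L -> grad_lipschitz_on (levelset J (x 0)) g L ->
  (* 3) *)
  unif_bounded_ops (fun k => (S k : X -> X)) ->
  (* 4) *)
  (armijo_ls -> exists2 delta : R, 0 < delta &
     unif_continuous_on (levelset_nbhd J (x 0) delta) J \/
     unif_continuous_on (levelset_nbhd J (x 0) delta) g) ->
  (* 5) *)
  (c0 = 0 -> unif_bounded_inverses (fun k v => tau k *: v + S k v)) ->
  (* 6) *)
  (C0 = None -> tau_g_variant \/
     (C2_gradient g /\ avg_hessian_cond ip g S x alpha d)) ->
  (tau_g_variant -> C0 = None) ->
  (* 8) *)
  unif_bounded_ops B -> unif_bounded_inverses B ->
  (* 9) *)
  (armijo_ls -> exists2 delta : R, 0 < delta &
     unif_continuous_on (levelset_nbhd J (x 0) delta) J \/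
     exists L' : R, grad_lipschitz_on (levelset_nbhd J (x 0) delta) g L') ->
  (* error bound *)
  0 < mu ->
  (forall k, (kbar <= k)%N ->
     J (x k) - limn (fun n => J (x n)) <= mu^-1 * `|g (x k)| ^+ 2) ->
  exists xs : X,
    [/\ g xs = 0 /\ limn (fun n => J (x n)) = J xs,
        rlinear_conv x xs,
        rlinear_conv (fun k => g (x k)) 0 &
        [/\ qlinear_conv (fun k => J (x k)) (J xs),
            forall k, (kbar <= k)%N ->
              J (x k.+1) - J xs
                <= (1 - sigma * alpha k * mu / opnorm (B k)) * (J (x k) - J xs) &
            exists2 q : R, q < 1 &
              forall k, (kbar <= k)%N ->
                1 - sigma * alpha k * mu / opnorm (B k) <= q]].
Proof.
move=> Hip run HC1 [lb Hlb] L0 HL HS _ _ _ _ [MB0 HMB] [MI0 HMI] _ mu0 HPL.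
move: run; rewrite /slbfgs_run /=.
move=> [[[c00 C0c] [[cs0 [c10 c20]] tau0]] [Hls [HSpsd [HBdef [HBd [Hal [Hx [Hg Htau]]]]]]]].
have htau k : 0 <= tau k.
  case: k => [|k]; first exact: ltW.
  have wl0 : 0 <= Num.min c0 (c1 * `|g (x k.+1)| `^ c2).
    by rewrite le_min c00 mulr_ge0 ?powR_ge0 // ltW.
  move: (Htau k) C0c; case: ifP => _ /andP[h _] C0c; apply: le_trans h;
  destruct C0 as [C|] => /=.
  - by rewrite le_min !le_max wl0 (le_trans c00 C0c) !orbT.
  - by rewrite le_max wl0 orbT.
  - by rewrite le_min !le_max wl0 (le_trans c00 C0c) !orbT.
  - by rewrite le_max wl0 orbT.
have Bprop k : [/\ linop (B k), symop ip (B k) & psdop ip (B k)].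
  rewrite (HBdef k); apply: fold_inv => //.
  - move=> a u v /=; rewrite linearP !scalerDr !scalerA [tau k * a]mulrC.
    by rewrite addrACA.
  - move=> u v /=; rewrite (ipDl Hip) (ipDr Hip) (ipZl Hip) (ipZr Hip).
    by rewrite (proj1 (HSpsd k)).
  - move=> u /=; rewrite (ipDl Hip) (ipZl Hip).
    by rewrite addr_ge0 ?mulr_ge0 ?(ippos Hip) // (proj2 (HSpsd k)).
  - rewrite all_map; apply/allP => j; rewrite mem_filter => /andP[st _] /=.
    apply: ltW; apply: le_lt_trans st; rewrite mulr_ge0 // ltW //.
set N := fun k => opnorm (B k).
set MB := `|MB0|; set MI := `|MI0|.
have hBb k : opbound (B k) MB.
  by move=> v; apply: le_trans (HMB k v) _; rewrite ler_wpM2r // ler_norm.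
have hBi k v : `|v| <= MI * `|B k v|.
  by apply: le_trans (proj2 (HMI k) v) _; rewrite ler_wpM2r // ler_norm.
have lB k : linop (B k) by case: (Bprop k).
have hNub k u : `|B k u| <= N k * `|u|.
  exact: (@opnorm_ub _ _ (B k) MB u (lB k) (normr_ge0 _) (hBb k)).
have hNle k : N k <= MB by exact: (@opnorm_le _ _ (B k) MB (normr_ge0 _) (hBb k)).
have hN0 k : 0 <= N k by exact: (@opnorm_ge0 _ _ (B k) MB (lB k) (normr_ge0 _) (hBb k)).
have hBnd k : B k (- d k) = g (x k) by rewrite linopN // HBd opprK.
have hgn0 k : g (x k) != 0.
  case: k => [|k]; last exact: Hg.
  apply/eqP => g0; move: (Hg 0%N); rewrite Hx.
  have d0 : d 0%N = 0.
    apply/eqP; rewrite -normr_le0; apply: le_trans (hBi 0%N _) _.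
    by rewrite HBd g0 oppr0 normr0 mulr0.
  by rewrite d0 scaler0 addr0 g0 eqxx.
have hgc k : `|g (x k)| ^+ 2 <= N k * - ip (g (x k)) (d k).
  case: (Bprop k) => l1 s1 p1.
  have := @key_ineq _ _ _ Hip (B k) (N k) (- d k) l1 s1 p1 (hN0 k) (hNub k).
  by rewrite hBnd (ipNr Hip).
have hgpos k : 0 < `|g (x k)| by rewrite normr_gt0.
have hNpos k : 0 < N k.
  rewrite lt_def (hN0 k) andbT; apply/eqP => N0.
  have := hNub k (- d k); rewrite hBnd N0 mul0r => h.
  by move: (hgpos k); rewrite ltNge h.
have hcneg k : ip (g (x k)) (d k) < 0.
  have h1 : 0 < `|g (x k)| ^+ 2 by rewrite exprn_gt0.
  have := lt_le_trans h1 (hgc k).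
  by rewrite pmulr_rgt0 // oppr_gt0.
have hdg k : `|d k| <= MI * `|g (x k)|.
  by apply: le_trans (hBi k (d k)) _; rewrite HBd normrN.
case: HC1 => HJ gcont.
have hsig : 0 < sigma < 1.
  move: Hls; case: ifP => _; first by case.
  by case=> /andP[s0 se] e1; rewrite s0 (lt_trans se e1).
have sig0 : 0 < sigma by case/andP: hsig.
have sig1 : sigma < 1 by case/andP: hsig.
have halpha0 k : 0 < alpha k by case: (Hal k).
have harm k : J (x k.+1) <= J (x k) + alpha k * sigma * ip (g (x k)) (d k).
  rewrite Hx; move: (Hal k) => [_]; case: ifP => _.
  - by case=> i [_ [h _]].
  - by case.
have hdec k : J (x k.+1) <= J (x k).
  apply: le_trans (harm k) _; rewrite gerDl.
  by rewrite pmulr_rle0 ?mulr_gt0 // ltW.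
have hlev k : J (x k) <= J (x 0%N).
  elim: k => [//|k IHk]; exact: le_trans (hdec k) IHk.
have MBpos : 0 < MB by apply: lt_le_trans (hNpos 0%N) (hNle 0%N).
have hdpos k : 0 < `|d k|.
  rewrite normr_gt0; apply/eqP => d0; move: (hgn0 k).
  by rewrite -hBnd d0 oppr0 linop0 // eqxx.
have MIpos : 0 < MI.
  rewrite lt_def normr_ge0 andbT; apply/eqP => MI0'.
  by move: (hdg 0%N); rewrite MI0' mul0r; rewrite leNgt hdpos.
have hdsq k : `|d k| ^+ 2 <= MI ^+ 2 * MB * - ip (g (x k)) (d k).
  have h1 : `|d k| ^+ 2 <= MI ^+ 2 * `|g (x k)| ^+ 2.
    rewrite -exprMn; apply: lerXn2r; rewrite ?nnegrE //.
    exact: (mulr_ge0 (normr_ge0 _) (normr_ge0 _)).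
  apply: le_trans h1 _; rewrite -mulrA ler_pM2l ?exprn_gt0 //.
  apply: le_trans (hgc k) _; rewrite ler_pM2r ?oppr_gt0 //.
have hlip k th : 0 <= th -> J (x k + th *: d k) <= J (x 0%N) ->
    ip (g (x k + th *: d k)) (d k) - ip (g (x k)) (d k)
      <= L * th * (MI ^+ 2 * MB * - ip (g (x k)) (d k)).
  move=> th0 hJ.
  rewrite -(ipBl Hip); apply: le_trans (ler_norm _) _.
  apply: le_trans (ipCS Hip _ _) _.
  have h1 := HL _ _ hJ (hlev k).
  rewrite addrAC subrr add0r normrZ ger0_norm // in h1.
  apply: le_trans (ler_wpM2r (normr_ge0 _) h1) _.
  have hd := hdsq k; rewrite expr2 in hd.
  have hLt : 0 <= L * th by rewrite mulr_ge0 // ltW.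
  nra.
set K0 := L * (MI ^+ 2 * MB).
have K0pos : 0 < K0 by rewrite mulr_gt0 // mulr_gt0 // exprn_gt0.
set amin := if armijo_ls then Num.min 1 (beta * (1 - sigma) / K0) else (1 - eta) / K0.
have hamin0 : 0 < amin.
  rewrite /amin; move: Hls; case: ifP => _.
  - case=> /andP[b0 _] _; rewrite lt_min ltr01 /= divr_gt0 // mulr_gt0 //.
    by rewrite subr_gt0.
  - by case=> _ e1; rewrite divr_gt0 // subr_gt0.
have hamin k : amin <= alpha k.
  set c := ip (g (x k)) (d k).
  have cpos : 0 < - c by rewrite oppr_gt0; exact: hcneg.
  rewrite /amin; move: (Hal k) => [a0]; move: Hls; case: ifP => _.
  - case=> /andP[b0 b1] _ [i [ai [_ fails]]].
    case: i ai fails => [|i] ai fails.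
      by rewrite ai expr0 ge_min lexx.
    have t0 : 0 < beta ^+ i by rewrite exprn_gt0.
    have nf := fails i (ltnSn i).
    have fl : J (x k) + beta ^+ i * sigma * c < J (x k + beta ^+ i *: d k).
      by rewrite ltNge; apply/negP => h; apply: nf.
    have [th [th0 tht eth Jth]] := @armijo_point _ _ _ J g HJ (x k) (d k) _ _ t0 sig0 sig1 (hcneg k) fl.
    have := hlip k th (ltW th0) (le_trans Jth (hlev k)).
    rewrite eth -/c => h.
    set P := L * (MI ^+ 2 * MB * - c).
    have hp : 0 <= P by rewrite /P !mulr_ge0 ?exprn_ge0 ?ltW.
    have e1 : L * th * (MI ^+ 2 * MB * - c) = th * P by rewrite /P; ring.
    have e2 : beta ^+ i * K0 * - c = beta ^+ i * P by rewrite /P /K0; ring.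
    have h2 : (1 - sigma) * - c <= beta ^+ i * K0 * - c.
      rewrite e2; apply: le_trans (_ : th * P <= _); last by rewrite ler_wpM2r // ltW.
      rewrite -e1; apply: le_trans h; rewrite le_eqVlt; apply/orP; left; apply/eqP; ring.
    have h3 : 1 - sigma <= beta ^+ i * K0 by rewrite -(ler_pM2r cpos).
    rewrite ai exprS ge_min; apply/orP; right.
    by rewrite ler_pdivrMr // -mulrA ler_pM2l.
  - case=> _ e1 [_ wolfe].
    have := hlip k (alpha k) (ltW a0) _.
    rewrite -Hx => /(_ (hlev k.+1)) h.
    have h2 : (1 - eta) * - c <= alpha k * K0 * - c.
      apply: le_trans (_ : L * alpha k * (MI ^+ 2 * MB * - c) <= _).
        apply: le_trans h.
        have : eta * c <= ip (g (x k.+1)) (d k) by rewrite Hx.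
        move=> h4; rewrite -/c; lra.
      by rewrite /K0 le_eqVlt; apply/orP; left; apply/eqP; ring.
    have h3 : 1 - eta <= alpha k * K0 by rewrite -(ler_pM2r cpos).
    by rewrite ler_pdivrMr.
have Jni : nonincreasing_seq (fun n => J (x n)).
  by apply/nonincreasing_seqP => n; exact: hdec.
have Jlb : has_lbound (range (fun n => J (x n))).
  by exists lb => _ [n _ <-]; exact: Hlb.
have Jcv : cvgn (fun n => J (x n)) by exact: nonincreasing_is_cvgn.
set Js := limn (fun n => J (x n)) in HPL *.
have hJs k : Js <= J (x k) by exact: nonincreasing_cvgn_ge.
have hcon k : (kbar <= k)%N ->
    J (x k.+1) - Js <= (1 - sigma * alpha k * mu / N k) * (J (x k) - Js).
  move=> hk.
  set c := ip (g (x k)) (d k).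
  set G := `|g (x k)| ^+ 2.
  set a := alpha k * sigma / N k.
  have a0 : 0 <= a by rewrite /a divr_ge0 // mulr_ge0 // ltW.
  have t1 : alpha k * sigma * c <= - (a * G).
    have := ler_wpM2l a0 (hgc k); rewrite -/c -/G => h.
    have -> : alpha k * sigma * c = - (a * (N k * - c)).
      by rewrite /a; field; rewrite gt_eqF.
    by rewrite lerN2.
  have t2 : mu * (J (x k) - Js) <= G.
    have := ler_wpM2l (ltW mu0) (HPL k hk).
    by rewrite mulrA mulfV ?gt_eqF // mul1r.
  have t3 : a * (mu * (J (x k) - Js)) <= a * G by rewrite ler_wpM2l.
  have e3 : (1 - sigma * alpha k * mu / N k) * (J (x k) - Js)
      = (J (x k) - Js) - a * (mu * (J (x k) - Js)).
    by rewrite /a; field; rewrite gt_eqF.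
  rewrite e3; have := harm k; rewrite -/c; lra.
set qc := 1 - sigma * amin * mu / MB.
have hq k : 1 - sigma * alpha k * mu / N k <= qc.
  have : sigma * amin * mu / MB <= sigma * alpha k * mu / N k.
    apply: le_trans (_ : sigma * amin * mu / N k <= _).
      by rewrite ler_pM2l ?mulr_gt0 // lef_pV2 ?posrE.
    by rewrite ler_pM2r ?invr_gt0 // ler_pM2r // ler_pM2l.
  rewrite /qc; lra.
have qc1 : qc < 1.
  by rewrite /qc gtrDl oppr_lt0 divr_gt0 // mulr_gt0 // mulr_gt0.
set q0 := Num.max (2^-1) qc.
have q0lt1 : q0 < 1 by rewrite /q0 gt_max qc1 invf_lt1 // ltr1n.
have q0pos : 0 < q0 by rewrite /q0 lt_max invr_gt0 ltr0n.
have qcq0 : qc <= q0 by rewrite /q0 le_max lexx orbT.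
have hcon' k : (kbar <= k)%N -> J (x k.+1) - Js <= q0 * (J (x k) - Js).
  move=> hk; apply: le_trans (hcon k hk) _; rewrite ler_wpM2r ?subr_ge0 //.
  exact: le_trans (hq k) qcq0.
have hgeo n : J (x (kbar + n)%N) - Js <= (J (x kbar) - Js) * q0 ^+ n.
  elim: n => [|n IHn]; first by rewrite addn0 expr0 mulr1.
  rewrite addnS; apply: le_trans (hcon' _ (leq_addr _ _)) _.
  by rewrite exprS mulrCA ler_wpM2l // ltW.
have hstep k : alpha k * sigma * - ip (g (x k)) (d k) <= J (x k) - Js.
  have := harm k; have := hJs k.+1; lra.
have hG k : `|g (x k)| ^+ 2 <= MB / (sigma * amin) * (J (x k) - Js).
  set c := ip (g (x k)) (d k).
  have cpos : 0 < - c by rewrite oppr_gt0; exact: hcneg.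
  have h1 : `|g (x k)| ^+ 2 <= MB * - c.
    by apply: le_trans (hgc k) _; rewrite ler_pM2r.
  have h2 : sigma * amin * - c <= J (x k) - Js.
    apply: le_trans (hstep k); rewrite -/c ler_pM2r // mulrC ler_pM2r //.
  rewrite mulrAC ler_pdivlMr ?mulr_gt0 //.
  apply: le_trans (_ : MB * - c * (sigma * amin) <= _).
    by rewrite ler_pM2r ?mulr_gt0.
  by rewrite -mulrA ler_pM2l // mulrC.
set A := MB / (sigma * amin) * (J (x kbar) - Js) / q0 ^+ kbar.
have A0 : 0 <= A.
  rewrite /A; apply: divr_ge0; last by rewrite exprn_ge0 // ltW.
  apply: mulr_ge0; last by rewrite subr_ge0.
  by rewrite divr_ge0 ?mulr_ge0 // ltW.
set r := (1 + q0) / 2.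
have r0 : 0 < r by rewrite /r divr_gt0 // addr_gt0.
have r1 : r < 1 by rewrite /r ltr_pdivrMr //; lra.
have q0r : q0 <= r ^+ 2.
  rewrite /r; have : 0 <= (1 - q0) ^+ 2 by exact: sqr_ge0.
  move=> h; rewrite expr2 in h *; nra.
have hgk k : (kbar <= k)%N -> `|g (x k)| <= (1 + A) * r ^+ k.
  move=> hk.
  have h1 : `|g (x k)| ^+ 2 <= A * (r ^+ k) ^+ 2.
    apply: le_trans (hG k) _.
    have e : k = (kbar + (k - kbar))%N by rewrite subnKC.
    have h2 := hgeo (k - kbar)%N; rewrite -e in h2.
    have qk : q0 ^+ k = q0 ^+ kbar * q0 ^+ (k - kbar) by rewrite -exprD -e.
    have qkpos : 0 < q0 ^+ kbar by rewrite exprn_gt0.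
    have h3 : q0 ^+ k <= (r ^+ k) ^+ 2.
      rewrite -exprM mulnC exprM; apply: lerXn2r; rewrite ?nnegrE //.
        exact: (ltW q0pos).
      by rewrite exprn_ge0 // ltW.
    apply: le_trans (_ : A * q0 ^+ k <= _); last first.
      by rewrite ler_wpM2l.
    have eA : A * q0 ^+ k = MB / (sigma * amin) * ((J (x kbar) - Js) * q0 ^+ (k - kbar)).
      rewrite /A qk; field.
      by rewrite expf_neq0 ?gt_eqF.
    rewrite eA; apply: ler_wpM2l => //.
    by rewrite divr_ge0 ?mulr_ge0 // ltW.
  have rk : 0 <= r ^+ k by rewrite exprn_ge0 // ltW.
  have gk : 0 <= `|g (x k)| by [].
  have h2 : `|g (x k)| ^+ 2 <= ((1 + A) * r ^+ k) ^+ 2.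
    apply: le_trans h1 _; have := sqr_ge0 (r ^+ k); move: (r ^+ k) => z hz.
    have := mulr_ge0 (mulr_ge0 A0 A0) hz; have := mulr_ge0 A0 hz; nra.
  have hA : 0 <= (1 + A) * r ^+ k by rewrite mulr_ge0 // addr_ge0.
  by move: h2; rewrite ler_pXn2r // nnegrE.
have hsk k : (kbar <= k)%N ->
    `|x k.+1 - x k| <= (MB / (sigma * mu) * MI * (1 + A)) * r ^+ k.
  move=> hk.
  set c := ip (g (x k)) (d k).
  have cpos : 0 < - c by rewrite oppr_gt0; exact: hcneg.
  have hup : alpha k * sigma <= MB / mu.
    have h1 : `|g (x k)| ^+ 2 <= MB * - c.
      by apply: le_trans (hgc k) _; rewrite ler_pM2r.
    have h2 : mu * (J (x k) - Js) <= `|g (x k)| ^+ 2.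
      have := ler_wpM2l (ltW mu0) (HPL k hk).
      by rewrite mulrA mulfV ?gt_eqF // mul1r.
    have h3 := hstep k; rewrite -/c in h3.
    have h4 : mu * (alpha k * sigma * - c) <= MB * - c.
      apply: le_trans h1; apply: le_trans h2; rewrite ler_wpM2l // ltW //.
    rewrite ler_pdivlMr // -(ler_pM2r cpos).
    have e : alpha k * sigma * mu * - c = mu * (alpha k * sigma * - c) by ring.
    by rewrite e.
  rewrite Hx addrAC subrr add0r normrZ gtr0_norm //.
  apply: le_trans (_ : alpha k * (MI * `|g (x k)|) <= _).
    by rewrite ler_pM2l.
  have hal : alpha k <= MB / (sigma * mu).
    rewrite ler_pdivlMr ?mulr_gt0 // mulrA -ler_pdivlMr //.
  have h5 := hgk k hk.
  have : alpha k * (MI * `|g (x k)|) <= MB / (sigma * mu) * (MI * ((1 + A) * r ^+ k)).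
    apply: ler_pM.
    - exact: ltW (halpha0 k).
    - exact: mulr_ge0 (normr_ge0 _) (normr_ge0 _).
    - exact: hal.
    - by rewrite ler_pM2l.
  by move/le_trans; apply; rewrite le_eqVlt; apply/orP; left; apply/eqP; ring.
have [Cg [Cg0 hCg]] := @ext_geom R (fun k => `|g (x k)|) r kbar r0 (1 + A) hgk.
have [Cx [Cx0 hCx]] := @ext_geom R (fun k => `|x k.+1 - x k|) r kbar r0 _ hsk.
have [xs [hx hxs]] := @geom_cauchy R X x Cx r (ltW r0) r1 hCx.
have hgl : (fun n => `|g (x n)|) @ \oo --> `|g xs|.
  have h := cvg_comp x g hx (gcont xs); exact: (cvg_norm h).
have hb k : `|g xs| <= Cg * r ^+ k.
  apply: (cvgr_to_le hgl); exists k => // n /= kn.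
  apply: le_trans (hCg n) _; rewrite ler_wpM2l //.
  exact: ler_wiXn2l (ltW r0) (ltW r1) _ _ kn.
have hr0 : (fun k => Cg * r ^+ k) @ \oo --> 0.
  have := cvgM (cvg_cst Cg) (cvg_expr (_ : `|r| < 1)).
  rewrite mulr0; apply; by rewrite ger0_norm // ltW.
have gxs : g xs = 0.
  apply/eqP; rewrite -normr_le0; apply: (cvgr_to_ge hr0).
  by exists 0%N => // k _; exact: hb.
have hJx : (J \o x) @ \oo --> J xs.
  exact: (cvg_comp x J hx (differentiable_continuous (proj1 (HJ xs)))).
have eJ : Js = J xs by exact: (cvg_lim (@Rhausdorff R) hJx).
exists xs; split.
- by split.
- exists (Cx / (1 - r)), r; split => //; last exact: ltW.
  by rewrite divr_ge0 // subr_ge0 ltW.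
- exists Cg, r; split => //; first exact: ltW.
  by move=> k; rewrite subr0; exact: hCg.
- split.
  + exists q0; split; first exact: ltW.
    split => //; exists kbar => k hk.
    rewrite -eJ !ger0_norm ?subr_ge0 //; exact: hcon' k hk.
  + by move=> k hk; rewrite -eJ; exact: hcon k hk.
  + by exists qc => // k hk; exact: hq k.
Qed.
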